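(* Let $G$ be a finite connected multigraph (loops and multiple edges allowed), and let $P\in\mathrm{Aut}(G)$. Then $\Theta_K(P)=\Theta_S(P)$, i.e. $$\operatorname{sign}(|P_E|)\cdot \operatorname{sign}\big(\det[P_E, H_1(G,\mathbb R)]\big)\;=\;\operatorname{sign}(P_V)\cdot\prod_{e\in E}\epsilon_P(e).$$
   Context: A finite multigraph $G$ is given by a finite vertex set $V$, a finite set $H$ of half-edges, a map $v:H\to V$ (the vertex to which a half-edge is attached), and a fixed-point-free involution $\iota$ of $H$; the edges are the $\iota$-orbits $\{h,\iota h\}$, and $E$ denotes the set of edges (an edge with $v(h)=v(\iota h)$ is a loop). An automorphism $P$ of $G$ is a pair of bijections $P_V:V\to V$, $P_H:H\to H$ with $v\circ P_H=P_V\circ v$ and $P_H\circ\iota=\iota\circ P_H$; it induces a permutation $|P_E|$ of $E$. Fix an orientation of each edge, i.e. a choice of one of its two half-edges as its ''tail'' half-edge $t(e)$. Define $\epsilon_P(e)=1$ if $P_H(t(e))=t(|P_E|(e))$ and $\epsilon_P(e)=-1$ otherwise. Let $C_1(G,\mathbb R)$ be the real vector space with basis $E$ and $C_0(G,\mathbb R)$ the one with basis $V$, with boundary map $\partial(e)=v(\iota t(e))-v(t(e))$ (so loops have boundary $0$); $H_1(G,\mathbb R)=\ker\partial$ is the first homology group of $G$. The linear map $P_E:C_1(G,\mathbb R)\to C_1(G,\mathbb R)$, $e\mapsto\epsilon_P(e)\,|P_E|(e)$, commutes with $\partial$ (where $P_V$ acts linearly on $C_0$), hence restricts to an invertible linear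 map of $H_1(G,\mathbb R)$, whose determinant is denoted $\det[P_E,H_1(G,\mathbb R)]$. Kontsevich's orientation homomorphism is $\Theta_K(P)=\operatorname{sign}(|P_E|)\cdot\operatorname{sign}(\det[P_E,H_1(G,\mathbb R)])$; Shoikhet's orientation homomorphism is $\Theta_S(P)=\operatorname{sign}(P_V)\cdot\prod_{e\in E}\epsilon_P(e)$ (independent of the chosen orientations). Here $\operatorname{sign}$ of a permutation is its signature. *)

(* Defs.v *)
From HB Require Import structures.
From mathcomp Require Import all_boot all_order all_algebra all_fingroup.
Set Implicit Arguments. Unset Strict Implicit. Unset Printing Implicit Defensive.
Import Order.TTheory GRing.Theory Num.Theory.
Local Open Scope ring_scope.

(* A finite multigraph: vertex set V, half-edge set H, attachment map
   v : H -> V and a fixed-point-free involution iota of H.  The edges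
   (iota-orbits) together with a chosen orientation are encoded by a finite
   type E and a tail map t : E -> H such that every half-edge is, in exactly
   one way, either t e or iota (t e): this is the bijectivity of
   (e, b) |-> if b then t e else iota (t e). *)

Section MG.
Variables (V H E : finType) (v : H -> V) (iota : H -> H) (t : E -> H).

Definition mg_adj : rel V :=
  fun x y => [exists h, (v h == x) && (v (iota h) == y)].

Definition mg_connected : Prop := forall x y : V, connect mg_adj x y.

Definition eps (PH : {perm H}) (PE : {perm E}) (e : E) (R : nzRingType) : R :=
  if PH (t e) == t (PE e) then 1 else -1.

Variable R : realFieldType.

(* Boundary map C_1 -> C_0 as a matrix acting on row vectors (chains),
   rows indexed by edges, columns by vertices (via enum_val):
   d(e) = v(iota t e) - v(t e). *)
Definition bdry_mx : 'M[R]_(#|E|, #|V|) :=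
  \matrix_(i, j) ((v (iota (t (enum_val i))) == enum_val j)%:R
                  - (v (t (enum_val i)) == enum_val j)%:R).

Definition PE_mx (PH : {perm H}) (PE : {perm E}) : 'M[R]_#|E| :=
  \matrix_(i, j) (eps PH PE (enum_val i) R * (PE (enum_val i) == enum_val j)%:R).

(* A basis of H_1 = ker d (row space of B = row_base (kermx d)). *)
Definition H1_basis := row_base (kermx bdry_mx).

Definition PE_on_H1 (PH : {perm H}) (PE : {perm E}) :=
  H1_basis *m PE_mx PH PE *m pinvmx H1_basis.

Definition det_PE_H1 (PH : {perm H}) (PE : {perm E}) : R :=
  \det (PE_on_H1 PH PE).

Definition perm_sign (T : finType) (s : {perm T}) : R := (-1) ^+ odd_perm s.

Definition Theta_K (PH : {perm H}) (PE : {perm E}) : R :=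
  perm_sign PE * Num.sg (det_PE_H1 PH PE).

Definition Theta_S (PV : {perm V}) (PH : {perm H}) (PE : {perm E}) : R :=
  perm_sign PV * \prod_(e : E) eps PH PE e R.

End MG.

(* Main.v *)
Require Import Defs.
From HB Require Import structures.
From mathcomp Require Import all_boot all_order all_algebra all_fingroup.
From mathcomp Require Import zify.
Import Order.TTheory GRing.Theory Num.Theory.
Local Open Scope ring_scope.

Module Helpers.
Set Implicit Arguments. Unset Strict Implicit. Unset Printing Implicit Defensive.

Lemma block_det (F : fieldType) m k s (e : (k + s = m)%N) (A : 'M[F]_m)
  (B : 'M_(k,m)) (C : 'M_(s,m)) (X : 'M_k) :
  row_free (col_mx B C) -> B *m A = X *m B ->
  exists Y Z, C *m A = Y *m B + Z *m C /\ \det A = \det X * \det Z.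
Proof.
subst m => fr BA.
have uM : col_mx B C \in unitmx by rewrite -row_free_unit.
set M := col_mx B C in uM *.
set N := C *m A *m invmx M.
exists (lsubmx N), (rsubmx N).
have CA : C *m A = lsubmx N *m B + rsubmx N *m C.
  by rewrite -mul_row_col hsubmxK /N -mulmxA mulVmx // mulmx1.
split=> //.
have: M *m A = block_mx X 0 (lsubmx N) (rsubmx N) *m M.
  by rewrite /M mul_col_mx mul_block_col mul0mx addr0 BA CA.
move/(congr1 determinant); rewrite !det_mulmx det_lblock => h.
have dM : \det M != 0 by rewrite -unitfE -unitmxE.
apply: (mulfI dM); by rewrite h mulrC.
Qed.

Lemma compl_exists (F : fieldType) m k (B : 'M[F]_(k,m)) : row_free B ->
  exists s (C : 'M_(s,m)), [/\ (k + s = m)%N, row_free (col_mx B C),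
     row_free C & (B :&: C)%MS = 0].
Proof.
move=> fB; exists (\rank (B^C)%MS), (row_base (B^C)%MS).
have BC : (B :&: row_base B^C)%MS = 0.
  apply/eqP; rewrite -submx0 -(capmx_compl B); apply: capmxS => //.
  by rewrite eq_row_base.
split => //; last exact: row_base_free.
  rewrite mxrank_compl; have kr : \rank B = k by apply/eqP.
  by rewrite -{1}kr subnKC // rank_leq_col.
rewrite /row_free -addsmxE mxrank_disjoint_sum //.
by rewrite (eq_row_base (B^C)%MS); move/eqP: fB => ->.
Qed.

Lemma det_small (F : fieldType) s (Z : 'M[F]_s) (x : 'cV_s) :
  (s <= 1)%N -> (s = 1%N -> x != 0) -> Z *m x = x -> \det Z = 1.
Proof.
case: s Z x => [|[|s]] Z x //= _; first by rewrite det_mx00.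
move=> /(_ erefl) x0 Zx; rewrite det_mx11.
have x00 : x 0 0 != 0.
  apply: contra x0 => /eqP h; apply/eqP/matrixP => i j.
  by rewrite !ord1 h mxE.
have := congr1 (fun M : 'M[F]_1 => M 0 0) Zx; rewrite mxE big_ord1 => h.
by apply: (mulIf x00); rewrite h mul1r.
Qed.

Lemma rowfree_inj (F : fieldType) p n (M : 'M[F]_(p,n)) (u : 'cV_n) :
  p = n -> row_free M -> M *m u = 0 -> u = 0.
Proof.
move=> e; subst p; rewrite row_free_unit => uM h.
by rewrite -(mulKmx uM u) h mulmx0.
Qed.

Section RP.
Variable T : finType.

Definition rfun (s : {perm T}) (i : 'I_#|T|) : 'I_#|T| := enum_rank (s (enum_val i)).
Lemma rfun_inj s : injective (rfun s).
Proof. by move=> i j /enum_rank_inj /perm_inj /enum_val_inj. Qed.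
Definition rperm (s : {perm T}) : 'S_#|T| := perm (@rfun_inj s).

Lemma rpermE s i : rperm s i = enum_rank (s (enum_val i)).
Proof. by rewrite permE. Qed.

Lemma rpermM s1 s2 : rperm (s1 * s2) = (rperm s1 * rperm s2)%g.
Proof. by apply/permP => i; rewrite permM !rpermE enum_rankK permM. Qed.

Lemma rperm1 : rperm 1 = 1%g.
Proof. by apply/permP => i; rewrite rpermE !perm1 enum_valK. Qed.

Lemma rpermT x y : rperm (tperm x y) = tperm (enum_rank x) (enum_rank y).
Proof.
apply/permP => i; rewrite rpermE (inj_tperm _ _ _ (@enum_rank_inj T)).
by rewrite enum_valK.
Qed.

Lemma rperm_odd s : odd_perm (rperm s) = odd_perm s.
Proof.
have [ts -> dts] := prod_tpermP s.
have -> : rperm (\prod_(t <- ts) tperm t.1 t.2)%g = (\prod_(t <- map (fun p => (enum_rank p.1, enum_rank p.2)) ts) tperm t.1 t.2)%g.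
  elim: ts {dts} => [|a ts IH]; first by rewrite !big_nil rperm1.
  by rewrite /= !big_cons rpermM IH rpermT.
rewrite !odd_perm_prod // ?size_map //.
rewrite all_map; apply: sub_all dts => p /=.
by rewrite /dpair /= (inj_eq (@enum_rank_inj T)).
Qed.

Lemma eq_rank (x : T) j : (enum_rank x == j) = (x == enum_val j).
Proof. by rewrite -(inj_eq (@enum_val_inj _ _)) enum_rankK. Qed.

Lemma sum_ind (R : nzRingType) (g : 'I_#|T| -> R) (x : T) :
  \sum_j g j * (x == enum_val j)%:R = g (enum_rank x).
Proof.
rewrite (bigD1 (enum_rank x)) //= enum_rankK eqxx mulr1 big1 ?addr0 // => j hj.
by rewrite -eq_rank eq_sym (negbTE hj) mulr0.
Qed.

Lemma prod_enumv (R : comNzRingType) (f : T -> R) :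
  \prod_(i < #|T|) f (enum_val i) = \prod_e f e.
Proof. by rewrite -(big_enum_val (A := T)). Qed.
End RP.

Section G.
Variables (R : realFieldType) (V H E : finType)
  (v : H -> V) (iota : H -> H) (t : E -> H).
Hypotheses (iota_invol : involutive iota)
  (iota_fpf : forall h : H, iota h != h)
  (t_orient : bijective (fun p : E * bool => if p.2 then t p.1 else iota (t p.1)))
  (G_conn : mg_connected v iota).
Variables (PV : {perm V}) (PH : {perm H}) (PE : {perm E}).
Hypotheses (PH_v : forall h : H, v (PH h) = PV (v h))
  (PH_iota : forall h : H, PH (iota h) = iota (PH h))
  (PE_induced : forall e : E, PH (t e) = t (PE e) \/ PH (t e) = iota (t (PE e))).

Let D := bdry_mx v iota t R.

Lemma sum_ind1 (x : V) : \sum_(j < #|V|) ((x == enum_val j)%:R : R) = 1.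
Proof.
have := sum_ind (fun _ => (1 : R)) x.
by under eq_bigr do rewrite mul1r.
Qed.

Lemma bdry_u : D *m (const_mx 1 : 'cV[R]_#|V|) = 0.
Proof.
apply/matrixP => i j; rewrite !mxE.
under eq_bigr do rewrite !mxE mulr1.
by rewrite sumrB !sum_ind1 subrr.
Qed.

Lemma perm_u n (s : 'S_n) : perm_mx s *m (const_mx 1 : 'cV[R]_n) = const_mx 1.
Proof. by rewrite -row_permE; apply/matrixP => i j; rewrite !mxE. Qed.

Lemma PE_decomp : PE_mx t R PH PE =
  diag_mx (\row_i eps t PH PE (enum_val i) R) *m perm_mx (rperm PE).
Proof.
rewrite mul_diag_mx; apply/matrixP => i j; rewrite !mxE.
by rewrite rpermE eq_rank.
Qed.

Lemma PE_commute : PE_mx t R PH PE *m D = D *m perm_mx (rperm PV).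
Proof.
rewrite PE_decomp -mulmxA -row_permE mul_diag_mx.
have -> : perm_mx (rperm PV) = perm_mx ((rperm PV)^-1%g)^-1%g :> 'M[R]_#|V| by rewrite invgK.
rewrite -col_permE.
apply/matrixP => i j; rewrite !mxE rpermE.
have hx : forall x : V, (x == enum_val ((rperm PV)^-1%g j)) = (PV x == enum_val j).
  move=> x; rewrite -eq_rank -(inj_eq (@perm_inj _ (rperm PV))) permKV.
  by rewrite rpermE enum_rankK eq_rank.
rewrite !hx -!PH_v PH_iota.
set e := enum_val i.
rewrite enum_rankK /eps; case: (PE_induced e) => ->.
  by rewrite eqxx mul1r.
rewrite (negbTE (iota_fpf _)) iota_invol.
by rewrite mulN1r opprB.
Qed.

Lemma conn_ker (y : 'rV[R]_#|V|) : y *m D^T = 0 -> (y <= (const_mx 1 : 'rV[R]_#|V|))%MS.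
Proof.
move=> yD.
pose f x := y 0 (enum_rank x).
have he : forall e, f (v (iota (t e))) = f (v (t e)).
  move=> e; have := congr1 (fun M : 'rV[R]_#|E| => M 0 (enum_rank e)) yD.
  rewrite !mxE.
  under eq_bigr do rewrite !mxE enum_rankK mulrBr.
  by rewrite sumrB !sum_ind => /eqP; rewrite subr_eq0 => /eqP.
have hh : forall h, f (v (iota h)) = f (v h).
  move=> h; case: t_orient => g gK Kg.
  have := Kg h; case: (g h) => e [] /= <- //.
  by rewrite iota_invol he.
have hc : forall x z, connect (mg_adj v iota) x z -> f x = f z.
  move=> x z /connectP [p pth ->]; elim: p x pth => //= a p IH x /andP [ax pa].
  rewrite -(IH _ pa); move/existsP: ax => [h /andP [/eqP <- /eqP <-]].
  by rewrite hh.
case: (pickP (@predT V)) => [x0 _ | V0].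
  have -> : y = f x0 *: const_mx 1.
    apply/matrixP => i j; rewrite !mxE ord1 mulr1 /f.

    by rewrite -{1}(enum_valK j) -/(f _) -(hc x0 (enum_val j)) ?G_conn.
  exact: scalemx_sub.
have -> : y = 0 by apply/matrixP => i j; have := V0 (enum_val j).
exact: sub0mx.
Qed.
End G.

End Helpers.
Import Helpers.


Theorem mainTheorem1 (R : realFieldType) (V H E : finType)
  (v : H -> V) (iota : H -> H) (t : E -> H)
  (iota_invol : involutive iota)
  (iota_fpf : forall h : H, iota h != h)
  (t_orient : bijective (fun p : E * bool => if p.2 then t p.1 else iota (t p.1)))
  (G_conn : mg_connected v iota)
  (PV : {perm V}) (PH : {perm H}) (PE : {perm E})
  (PH_v : forall h : H, v (PH h) = PV (v h))
  (PH_iota : forall h : H, PH (iota h) = iota (PH h))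
  (PE_induced : forall e : E, PH (t e) = t (PE e) \/ PH (t e) = iota (t (PE e))) :
  Theta_K v iota t R PH PE = Theta_S t R PV PH PE.
Proof.
set D := bdry_mx v iota t R.
set A := PE_mx t R PH PE.
set Pv : 'M[R]_#|V| := perm_mx (rperm PV).
have AD : A *m D = D *m Pv := PE_commute R iota_invol iota_fpf PH_v PH_iota PE_induced.
set B := H1_basis v iota t R.
have BD : B *m D = 0 by apply/sub_kermxP; rewrite eq_row_base.
have BA : B *m A = (B *m A *m pinvmx B) *m B.
  rewrite mulmxKpV //; rewrite /B /H1_basis -/D eq_row_base.
  by apply/sub_kermxP; rewrite -mulmxA AD mulmxA BD mul0mx.
have [s [C [ks frBC frC BC0]]] := compl_exists (row_base_free (kermx D)).
have [Y [Z [CA detA]]] := block_det ks frBC BA.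
set W := C *m D.
have WPv : W *m Pv = Z *m W.
  by rewrite /W -mulmxA -AD !mulmxA CA mulmxDl -(mulmxA Y) BD mulmx0 add0r.
have rW : \rank W = s.
  have := mxrank_mul_ker C D.
  have -> : \rank (C :&: kermx D)%MS = 0%N.
    apply/eqP; rewrite mxrank_eq0 -submx0 -BC0 capmxC; apply: capmxS => //.
    by rewrite eq_row_base.
  by rewrite addn0 => ->; apply/eqP.
have frW : row_free W by rewrite /row_free rW.
have [s' [W' [ss' frWW' _ _]]] := compl_exists frW.
have [Y' [Z' [W'Pv detPv]]] := block_det ss' frWW' WPv.
set u : 'cV[R]_#|V| := const_mx 1.
have Du : D *m u = 0 := bdry_u R v iota t.
have Pu : Pv *m u = u := perm_u R (rperm PV).
have Wu : W *m u = 0 by rewrite /W -mulmxA Du mulmx0.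
have Z'x : Z' *m (W' *m u) = W' *m u.
  by rewrite -{2}Pu (mulmxA W') W'Pv mulmxDl -(mulmxA Y') Wu mulmx0 add0r mulmxA.
have s'le : (s' <= 1)%N.
  have k1 : (\rank (kermx D^T) <= 1)%N.
    apply: leq_trans (rank_leq_row (const_mx 1 : 'rV[R]_#|V|)).
    apply: mxrankS; apply/row_subP => i; apply: (conn_ker iota_invol t_orient G_conn).
    by rewrite -row_mul mulmx_ker row0.
  move: k1; rewrite mxrank_ker mxrank_tr.
  have := mxrank_ker D; have := rank_leq_row D; have := rank_leq_col D.
  move: ks ss'; lia.
have x0 : s' = 1%N -> W' *m u != 0.
  move=> e1; apply/negP => /eqP h.
  have := rowfree_inj ss' frWW' (u := u).
  rewrite mul_col_mx Wu h col_mx0 => /(_ erefl) u0.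
  have n0 : (0 < #|V|)%N by lia.
  have := congr1 (fun M : 'cV[R]_#|V| => M (Ordinal n0) 0) u0.
  by rewrite !mxE => /eqP; rewrite oner_eq0.
have dZ' := det_small s'le x0 Z'x.
rewrite dZ' mulr1 /Pv det_perm rperm_odd in detPv.
have dA : \det A = (\prod_e eps t PH PE e R) * (-1)^+ odd_perm PE.
  rewrite /A PE_decomp det_mulmx det_diag det_perm rperm_odd.
  under eq_bigr do rewrite mxE.
  by congr (_ * _); exact: (prod_enumv (fun e => eps t PH PE e R)).
rewrite dA in detA.
rewrite /Theta_K /Theta_S /det_PE_H1 /PE_on_H1 -/B -/A /perm_sign.
set X := \det _.
set p := \prod_e _.
set sE := (-1) ^+ odd_perm PE.
set sV := (-1) ^+ odd_perm PV.
have sE2 : sE * sE = 1 by rewrite -signr_addb addbb.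
have sV2 : sV * sV = 1 by rewrite -signr_addb addbb.
have hX : X = p * sE * sV.
  by rewrite -[X]mulr1 -sV2 mulrA /sV {1}detPv -detA.
have p2 : p ^+ 2 = 1.
  rewrite /p -prodrXl big1 // => e _; rewrite /eps; case: ifP => _.
    by rewrite expr1n.
  by rewrite sqrrN expr1n.
have X2 : X ^+ 2 = 1.
  by rewrite hX !exprMn p2 mul1r !expr2 sE2 sV2 mulr1.
have sgX : Num.sg X = X.
  by move: X2 => /eqP; rewrite sqrf_eq1 => /orP [] /eqP ->; rewrite ?sgr1 ?sgrN1.
rewrite sgX hX mulrA mulrA [sE * p]mulrC -[p * sE * sE]mulrA sE2 mulr1 mulrC.
by [].
Qed.
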